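(* For any commutative ring $\mathbf k$ and any $0\le d\le m-1$, the complex $\operatorname{sk}_d\Delta_{[m]}$ is HMF-presented over $\mathbf k$.
   Context: $\Delta_{[m]}$ is the full simplex on $[m]$, $\operatorname{sk}_d$ its $d$-skeleton. For a complex $\mathcal K$ and $I\subseteq[m]$: $\mathcal K_I$ is the full subcomplex, $\partial\Delta_I=\{J\subsetneq I\}$, $\partial^2\Delta_I=\{J\subseteq I:|I\setminus J|\ge2\}$, $\mathrm{MF}(\mathcal K)=\{I:\mathcal K_I=\partial\Delta_I\}$, $\mathrm{AMF}(\mathcal K)=\{L:\partial^2\Delta_L\subseteq\mathcal K_L\subsetneq\partial\Delta_L\}$. With oriented augmented chains $e_I$ and $d(e_I)=\sum_{i\in I}(-1)^{|I_{<i}|}e_{I\setminus i}$, $I_{<i}=\{j\in I:j<i\}$, each $I\in\mathrm{MF}(\mathcal K_J)$ defines $[\partial\Delta_I]\in\widetilde H_{|I|-2}(\mathcal K_J;\mathbf k)$ (class of $d(e_I)$), and each $L\in\mathrm{AMF}(\mathcal K_J)$ defines the formal relation $\rho_L=\sum_{i\in L,L\setminus i\notin\mathcal K}(-1)^{|L_{<i}|}x_{L\setminus i}$. $\mathcal K$ is HMF-presented over $\mathbf k$ if for every $J\subseteq[m]$ the sequence $\bigoplus_{L\in\mathrm{AMF}(\mathcal K_J)}\mathbf k\rho_L\to\bigoplus_{I\in\mathrm{MF}(\mathcal K_J)}\mathbf kx_I\to\widetilde H_*(\mathcal K_J;\mathbf k)\to0$, $x_I\mapsto[\partial\Delta_I]$,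 is exact. *)

(* Defs.v *)
From HB Require Import structures.
From mathcomp Require Import all_boot all_order all_algebra.
Set Implicit Arguments. Unset Strict Implicit. Unset Printing Implicit Defensive.
Import GRing.Theory.
Local Open Scope ring_scope.

(* Simplicial complexes on the vertex set [m] = 'I_m, given as sets of faces
   (the empty face is included: augmented setting). *)
Section HMF.
Variables (k : comPzRingType) (m : nat).
Notation vset := {set 'I_m}.
Notation cplx := {set {set 'I_m}}.

Definition skel (d : nat) : cplx := [set I : vset | (#|I| <= d.+1)%N].

Definition full_sub (K : cplx) (J : vset) : cplx := [set I in K | I \subset J].

Definition bdD (I : vset) : cplx := [set S : vset | S \proper I].
Definition bd2D (L : vset) : cplx :=
  [set S : vset | (S \subset L) && (2 <= #|L :\: S|)%N].

Definition MF_on (V : vset) (L : cplx) : cplx :=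
  [set I : vset | (I \subset V) && (full_sub L I == bdD I)].
Definition AMF_on (V : vset) (L : cplx) : cplx :=
  [set A : vset | [&& A \subset V, bd2D A \subset full_sub L A
                   & full_sub L A \proper bdD A]].

(* oriented augmented chains: a chain is a function on subsets of [m];
   it is a chain of L when supported on faces of L *)
Definition chain_in (L : cplx) (c : {ffun vset -> k}) :=
  forall S, S \notin L -> c S = 0.

(* sign (-1)^{|I_{<i}|} for I = S u {i}, i notin S *)
Definition sgn (S : vset) (i : 'I_m) : k :=
  (-1) ^+ #|[set j in S | (val j < val i)%N]|.

Definition e_ (I : vset) : {ffun vset -> k} := [ffun S => (S == I)%:R].

(* boundary map d(e_I) = sum_{i in I} (-1)^{|I_{<i}|} e_{I \ i}, extended linearly *)
Definition bdry (c : {ffun vset -> k}) : {ffun vset -> k} :=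
  [ffun S : vset => \sum_(i : 'I_m | i \notin S) sgn S i * c (i |: S)].

(* image of sum_I x_I x_I under x_I |-> d(e_I) (a cycle representative) *)
Definition mf_map (V : vset) (L : cplx) (x : {ffun vset -> k}) : {ffun vset -> k} :=
  [ffun S : vset => \sum_(I in MF_on V L) x I * bdry (e_ I) S].

Definition rho (L : cplx) (A : vset) : {ffun vset -> k} :=
  [ffun I : vset => \sum_(i in A | (A :\ i) \notin L) sgn (A :\ i) i * e_ (A :\ i) I].

(* HMF-presentation: for every nonempty J, the sequence
   (+)_{AMF(K_J)} k rho -> (+)_{MF(K_J)} k x_I -> H~_*(K_J;k) -> 0 is exact.
   H~_* is the homology of the total augmented chain complex of K_J. *)
Definition HMF_presented (K : cplx) : Prop :=
  forall J : vset, J != set0 ->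
  let L := full_sub K J in
  (* surjectivity onto reduced homology *)
  (forall z, chain_in L z -> bdry z = 0 ->
     exists x : {ffun vset -> k}, exists w, chain_in L w /\
       z = mf_map J L x + bdry w)
  /\
  (* exactness at (+)_{MF} k x_I : kernel = span of the rho_A *)
  (forall x : {ffun vset -> k}, (forall I, I \notin MF_on J L -> x I = 0) ->
     ((exists w, chain_in L w /\ mf_map J L x = bdry w) <->
      (exists y : {ffun vset -> k}, x = [ffun I : vset => \sum_(A in AMF_on J L) y A * rho L A I]))).

End HMF.

(* Main.v *)
Require Import Defs.
From mathcomp Require Import all_boot all_order all_algebra.
Set Implicit Arguments. Unset Strict Implicit. Unset Printing Implicit Defensive.
Import GRing.Theory.
From mathcomp Require Import zify.
Local Open Scope ring_scope.

Section Chain.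
Variables (k : comPzRingType) (m : nat).
Notation vset := {set 'I_m}.
Notation ch := {ffun vset -> k}.

Lemma sgn_sq (S : vset) i : sgn k S i * sgn k S i = 1.
Proof. by rewrite /sgn -exprMn mulrNN mulr1 expr1n. Qed.

Lemma sgnU (S : vset) i j : i \notin S -> j != i ->
  sgn k (i |: S) j = sgn k S j * (-1) ^+ (i < j)%N.
Proof.
move=> iS ji; rewrite /sgn -exprD; congr (_ ^+ _).
have -> : [set x in i |: S | (val x < val j)%N] =
   if (val i < val j)%N then i |: [set x in S | (val x < val j)%N]
   else [set x in S | (val x < val j)%N].
  case: ifP => h; apply/setP=> x; rewrite !inE;
  case: (eqVneq x i) => [->|_] //=; by rewrite ?h ?(negbTE iS).
case: ifP => h; last by rewrite addn0.
by rewrite cardsU1 inE (negbTE iS) addnC.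
Qed.

Lemma sgn_swap (S : vset) i j : i \notin S -> j \notin S -> i != j ->
  sgn k S i * sgn k (i |: S) j = - (sgn k S j * sgn k (j |: S) i).
Proof.
move=> iS jS ij; rewrite sgnU // 1?eq_sym // sgnU //.
rewrite !mulrA [sgn k S j * sgn k S i]mulrC -mulrN; congr (_ * _).
case: (ltngtP (val i) (val j)) => h /=; rewrite ?expr0 ?expr1 ?mulr1 ?mul1r ?opprK //.
by rewrite (val_inj h) eqxx in ij.
Qed.

Lemma sgn_prod (R : vset) i v : i \notin R -> v \notin R -> i != v ->
  sgn k (v |: R) i * sgn k (i |: R) v = - (sgn k R v * sgn k R i).
Proof.
move=> iR vR iv; rewrite sgnU // sgnU // 1?eq_sym //.
have E : (-1)^+(v < i)%N * (-1)^+(i < v)%N = -1 :> k.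
  case: (ltngtP (val i) (val v)) => h /=; rewrite ?expr0 ?expr1 ?mulr1 ?mul1r //.
  by rewrite (val_inj h) eqxx in iv.
by rewrite mulrACA E mulrN1 mulrC.
Qed.

Lemma antisym_sum (F : 'I_m -> 'I_m -> k) :
  (forall i j, F j i = - F i j) -> (forall i, F i i = 0) ->
  \sum_i \sum_j F i j = 0.
Proof.
move=> Fa F0; rewrite pair_bigA /=.
rewrite (bigID (fun p : 'I_m * 'I_m => (val p.1 < val p.2)%N)) /=.
set s1 := (X in X + _).
have -> : \sum_(p : 'I_m * 'I_m | ~~ (val p.1 < val p.2)%N) F p.1 p.2 =
   \sum_(p : 'I_m * 'I_m | (val p.2 < val p.1)%N) F p.1 p.2.
  rewrite big_mkcond [RHS]big_mkcond; apply: eq_bigr => p _.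
  case: (ltngtP (val p.1) (val p.2)) => //= h.
  by rewrite (val_inj h) F0.
rewrite (reindex_inj (h := fun p : 'I_m * 'I_m => (p.2, p.1))) /=; last first.
  by case=> a b [c e] /= [-> ->].
rewrite /s1 -big_split /=; apply: big1 => p _; by rewrite [F p.2 _]Fa subrr.
Qed.

Lemma bdryE (c : ch) S : bdry c S = \sum_(i | i \notin S) sgn k S i * c (i |: S).
Proof. by rewrite ffunE. Qed.

Lemma bdry_dd (c : ch) : bdry (bdry c) = 0.
Proof.
apply/ffunP=> S; rewrite ffunE [RHS]ffunE.
pose F i j := if [&& i \notin S, j \notin S & i != j] then
   sgn k S i * sgn k (i |: S) j * c (j |: (i |: S)) else 0.
transitivity (\sum_i \sum_j F i j); last first.
  apply: antisym_sum => [i j|i]; last by rewrite /F eqxx !andbF.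
  have Hc : [&& j \notin S, i \notin S & j != i] = [&& i \notin S, j \notin S & i != j].
    by rewrite eq_sym andbCA.
  rewrite /F Hc; case: ifP => [/and3P[iS jS ij]|_]; last by rewrite oppr0.
  by rewrite setUCA (sgn_swap iS jS ij) mulNr opprK.
rewrite big_mkcond; apply: eq_bigr => i _; rewrite bdryE mulr_sumr.
case: (boolP (i \notin S)) => iS; last by rewrite big1 // => j _; rewrite /F (negbTE iS).
rewrite big_mkcond /=; apply: eq_bigr => j _.
rewrite /F iS in_setU1 negb_or [j == i]eq_sym /=.
by case: (i != j); case: (j \notin S) => //=; rewrite mulrA.
Qed.

Definition hcone (v : 'I_m) (c : ch) : ch :=
  [ffun T : vset => if v \in T then sgn k (T :\ v) v * c (T :\ v) else 0].

Lemma setUUD1 (R : vset) i v : i != v -> v \notin R -> (i |: (v |: R)) :\ v = i |: R.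
Proof.
move=> iv vR; apply/setP=> x; rewrite !inE.
case: (eqVneq x v) => [->|xv] /=; first by rewrite eq_sym (negbTE iv) (negbTE vR).
by [].
Qed.

Lemma homotopy v (c : ch) S : bdry (hcone v c) S + hcone v (bdry c) S = c S.
Proof.
case: (boolP (v \in S)) => vS; last first.
  rewrite [hcone v _ S]ffunE (negbTE vS) addr0 bdryE (bigD1 v) //=.
  rewrite ffunE setU11 setU1K // mulrA sgn_sq mul1r big1 ?addr0 // => i /andP[iS iv].
  by rewrite ffunE !inE (negbTE vS) orbF eq_sym (negbTE iv) mulr0.
suff H : forall R : vset, v \notin R ->
    bdry (hcone v c) (v |: R) + hcone v (bdry c) (v |: R) = c (v |: R).
  by rewrite -(setD1K vS); apply: H; rewrite !inE eqxx.
move=> R vR; rewrite [hcone v _ _]ffunE setU11 setU1K // bdryE [bdry c R]ffunE.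
rewrite [X in sgn k R v * X](bigD1 v) //= mulrDr mulrA sgn_sq mul1r addrCA.
rewrite -[RHS]addr0; congr (_ + _).
rewrite mulr_sumr (eq_bigl (fun i => (i \notin R) && (i != v))); last first.
  by move=> i; rewrite in_setU1 negb_or andbC.
rewrite -big_split big1 // => i /andP[iR iv] /=.
rewrite ffunE !inE eqxx orbT setUUD1 // !mulrA sgn_prod // mulNr addNr //.
Qed.

Definition restr (P : {set vset}) (c : ch) : ch :=
  [ffun S => if S \in P then c S else 0].

Lemma sum_bdry_e (P : {set vset}) (x : ch) S :
  \sum_(I in P) x I * bdry (e_ k I) S = bdry (restr P x) S.
Proof.
rewrite bdryE; under eq_bigr do rewrite bdryE mulr_sumr.
rewrite exchange_big /=; apply: eq_bigr => i iS; rewrite ffunE.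
case: (boolP (i |: S \in P)) => h.
  rewrite (bigD1 (i |: S)) //= big1 ?addr0; last first.
    by move=> I /andP[_ ne]; rewrite ffunE eq_sym (negbTE ne) !mulr0.
  by rewrite ffunE eqxx mulr1 mulrC.
rewrite mulr0 big1 // => I IP; rewrite ffunE.
have -> : (i |: S == I) = false by apply/negbTE; apply: contraNneq h => ->.
by rewrite !mulr0.
Qed.

Lemma zeroE (S : vset) : (0 : ch) S = 0.
Proof. by rewrite ffunE. Qed.

Lemma addE (a b : ch) (S : vset) : (a + b) S = a S + b S.
Proof. by rewrite ffunE. Qed.

Lemma bdry_add (a b : ch) : bdry (a + b) = bdry a + bdry b.
Proof.
apply/ffunP=> S; rewrite addE !bdryE -big_split; apply: eq_bigr => i _.
by rewrite addE mulrDr.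
Qed.

Lemma bdry0 : bdry (0 : ch) = 0.
Proof. by apply/ffunP=> S; rewrite zeroE bdryE big1 // => i _; rewrite zeroE mulr0. Qed.

Lemma hcone0 v S : hcone v (0 : ch) S = 0.
Proof. by rewrite ffunE zeroE mulr0 if_same. Qed.

Lemma bdry_eq (a b : ch) (S : vset) : (forall i, i \notin S -> a (i |: S) = b (i |: S)) ->
  bdry a S = bdry b S.
Proof. by move=> H; rewrite !bdryE; apply: eq_bigr => i iS; rewrite H. Qed.

End Chain.

Section Main.
Variables (k : comPzRingType) (m d : nat) (J : {set 'I_m}).
Notation vset := {set 'I_m}.
Notation ch := {ffun vset -> k}.
Let L := full_sub (skel m d) J.

Lemma inL (S : vset) : (S \in L) = (#|S| <= d.+1)%N && (S \subset J).
Proof. by rewrite !inE. Qed.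

Lemma inMF (I : vset) : (I \in MF_on J L) = (I \subset J) && (#|I| == d.+2).
Proof.
rewrite inE; case: (boolP (I \subset J)) => IJ //=.
apply/eqP/eqP.
  move=> E.
  have nI : I \notin full_sub L I by rewrite E inE properxx.
  move: nI; rewrite inE inL IJ subxx !andbT -ltnNge => cI.
  have /set0Pn [i iI] : I != set0 by rewrite -card_gt0; lia.
  have : I :\ i \in full_sub L I by rewrite E inE properD1.
  rewrite inE inL => /andP[/andP[c1 _] _].
  have h := cardsD1 i I; rewrite iI /= in h.
  by apply/eqP; rewrite eqn_leq cI andbT h add1n ltnS.
move=> cI; apply/setP=> S; rewrite !inE properEcard.
case: (boolP (S \subset I)) => SI; rewrite ?andbF ?andbT //.
rewrite (subset_trans SI IJ) andbT cI; lia.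
Qed.

Lemma AMF_card (A : vset) : A \in AMF_on J L -> (d.+3 <= #|A|)%N.
Proof.
rewrite inE => /and3P[AJ _ /properP[_ [S]]].
rewrite !inE properEcard => /andP[SA cS].
rewrite SA (subset_trans SA AJ) !andbT -ltnNge; lia.
Qed.

Lemma inAMF (A : vset) : A \subset J -> #|A| = d.+3 -> A \in AMF_on J L.
Proof.
move=> AJ cA; rewrite inE AJ /=; apply/andP; split.
  apply/subsetP=> S; rewrite !inE => /andP[SA c2].
  rewrite SA (subset_trans SA AJ) !andbT.
  move: c2; rewrite cardsD (setIidPr SA) cA; lia.
apply/properP; split.
  apply/subsetP=> S; rewrite !inE => /andP[/andP[cS _] SA].
  rewrite properEcard SA cA; lia.
have /set0Pn [i iA] : A != set0 by rewrite -card_gt0 cA.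
exists (A :\ i); first by rewrite inE properD1.
rewrite !inE negb_and; apply/orP; left; rewrite negb_and; apply/orP; left.
have h := cardsD1 i A; rewrite iA cA /= in h.
by rewrite -ltnNge; move: h; rewrite add1n => -[<-].
Qed.

Lemma rho_bdry (A I : vset) : A \in AMF_on J L -> rho k L A I = bdry (e_ k A) I.
Proof.
move=> HA; rewrite ffunE bdryE big_mkcond [RHS]big_mkcond.
apply: eq_bigr => i _ /=; rewrite !ffunE.
case: (eqVneq I (A :\ i)) => [->|ne].
  rewrite !inE eqxx /=; case: (boolP (i \in A)) => iA /=.
    rewrite ifT; last first.
      rewrite negb_and -ltnNge; apply/orP; left.
      have h1 := AMF_card HA; have h2 := cardsD1 i A; rewrite iA /= in h2.
      by rewrite h2 add1n ltnS in h1.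
    by rewrite setD1K // eqxx.
  have -> : (i |: A :\ i == A) = false.
    by apply/negbTE; apply: contraNneq iA => <-; rewrite setU11.
  by rewrite mulr0.
rewrite mulr0 if_same; case: ifP => iI //.
case: eqVneq => [E|]; last by rewrite mulr0.
by move: ne; rewrite -E setU1K ?eqxx // iI.
Qed.

Lemma sum_rho (y : ch) (I : vset) :
  \sum_(A in AMF_on J L) y A * rho k L A I = bdry (restr (AMF_on J L) y) I.
Proof.
rewrite -sum_bdry_e; apply: eq_bigr => A HA; by rewrite rho_bdry.
Qed.

End Main.

Theorem mainTheorem12 (k : comPzRingType) (m d : nat) :
  (d < m)%N -> HMF_presented k (skel m d).
Proof.
move=> _ J J0 /=.
set L := full_sub (skel m d) J.
have [v vJ] := set0Pn _ J0.
split.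
  move=> z zL dz.
  set u := hcone v z.
  have uJ : forall T : {set 'I_m}, ~~ (T \subset J) -> u T = 0.
    move=> T TJ; rewrite /u ffunE; case: ifP => vT //.
    rewrite zL ?mulr0 // inL negb_and; apply/orP; right.
    by apply: contra TJ => h; rewrite -(setD1K vT) subUset sub1set vJ.
  exists u, (restr L u); split.
    by move=> S SL; rewrite ffunE (negbTE SL).
  apply/ffunP=> S; rewrite [RHS]addE [mf_map _ _ _ _]ffunE sum_bdry_e -addE -bdry_add.
  case: (leqP #|S| d.+1) => cS.
    rewrite -[z S](homotopy v) -/u dz hcone0 addr0; apply: bdry_eq => i iS.
    rewrite addE [restr _ _ _]ffunE [restr _ _ _]ffunE inMF inL.
    case: (boolP (i |: S \subset J)) => TJ; last by rewrite !andbF addr0 uJ.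
    have := cardsU1 i S; rewrite iS /= => cT.
    rewrite !andbT; case: (eqVneq #|i |: S| d.+2) => c2.
      by rewrite c2 ltnn addr0.
    rewrite ifT ?add0r //; move: c2 cS; rewrite cT; move: #|S| => n; lia.
  rewrite zL; last by rewrite inL negb_and -ltnNge cS.
  rewrite bdryE big1 // => i iS.
  have := cardsU1 i S; rewrite iS /= => cT.
  rewrite addE [restr _ _ _]ffunE [restr _ _ _]ffunE inMF inL.
  rewrite ifF; last first.
    by apply/negbTE; rewrite negb_and; apply/orP; right; move: cS; rewrite cT; move: #|S| => n; lia.
  rewrite ifF ?addr0 ?mulr0 //; apply/negbTE; rewrite negb_and; apply/orP; left.
  by move: cS; rewrite cT; move: #|S| => n; lia.
move=> x xMF.
have mfx : mf_map J L x = bdry x.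
  apply/ffunP=> S; rewrite ffunE sum_bdry_e; congr (bdry _ S).
  by apply/ffunP=> T; rewrite ffunE; case: ifP => // /negbT /xMF ->.
rewrite mfx; split.
  case=> w [wL E].
  have dx : bdry x = 0.
    apply/ffunP=> S; rewrite zeroE; case: (leqP #|S| d) => cS.
      rewrite bdryE big1 // => i iS; rewrite xMF ?mulr0 // inMF negb_and; apply/orP; right.
      by rewrite cardsU1 iS /=; move: cS; move: #|S| => n; lia.
    rewrite E bdryE big1 // => i iS; rewrite wL ?mulr0 // inL negb_and; apply/orP; left.
    by rewrite cardsU1 iS /=; move: cS; move: #|S| => n; lia.
  exists (hcone v x); apply/ffunP=> I; rewrite ffunE sum_rho.
  rewrite -[x I](homotopy v) dx hcone0 addr0; apply: bdry_eq => i iI.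
  rewrite [restr _ _ _]ffunE; case: ifP => // /negbT nA.
  rewrite ffunE; case: ifP => vT //; rewrite xMF ?mulr0 //.
  apply: contra nA; rewrite inMF => /andP[TJ /eqP cT]; apply: inAMF.
    by rewrite -(setD1K vT) subUset sub1set vJ.
  by have := cardsD1 v (i |: I); rewrite vT cT.
case=> y Ex; exists 0; split; first by move=> S _; rewrite zeroE.
have -> : x = bdry (restr (AMF_on J L) y).
  by apply/ffunP=> I; rewrite Ex ffunE sum_rho.
by rewrite bdry_dd bdry0.
Qed.
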